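(* Let $\Sigma\in\mathbb R^{d\times d}$ be symmetric positive semidefinite with eigenvalues $\lambda_1\ge\dots\ge\lambda_d\ge0$ and corresponding orthonormal eigenvectors $u_1,\dots,u_d$. For each $\ell$ let $u_{\ell,(1)}^2\le\dots\le u_{\ell,(d)}^2$ be the order statistics of $u_{\ell,1}^2,\dots,u_{\ell,d}^2$. Let $\Delta$ be any diagonal matrix with $\Delta\succeq\Sigma$, and let $\Delta_{(1,1)}\le\dots\le\Delta_{(d,d)}$ be the order statistics of its diagonal entries. Then for all $k=1,\dots,d$, $$\Delta_{(k,k)}\ \ge\ b_k(\Sigma):=\max_{\ell\le d}\ \lambda_\ell\sum_{j=1}^k u_{\ell,(j)}^2.$$
   Context: $\succeq$ denotes the positive semidefinite order. *)

(* Defs.v *)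
From mathcomp Require Import all_boot all_order all_algebra.
Set Implicit Arguments. Unset Strict Implicit. Unset Printing Implicit Defensive.
Import Order.TTheory GRing.Theory Num.Theory.
Local Open Scope ring_scope.

Definition psd (R : realFieldType) (d : nat) (A : 'M[R]_d) : Prop :=
  A^T = A /\ forall x : 'cV[R]_d, 0 <= (x^T *m A *m x) 0 0.

(* k-th order statistic (0-indexed, increasing order) of a sequence. *)
Definition ordstat (R : realFieldType) (s : seq R) (k : nat) : R :=
  nth 0 (sort <=%R s) k.

(* Order statistics of the squared coordinates of the l-th column of U:
   u_{l,(j+1)}^2 = sq_ordstat U l j  (0-indexed j). *)
Definition sq_ordstat (R : realFieldType) (d : nat) (U : 'M[R]_d) (l : 'I_d)
  (j : nat) : R :=
  ordstat [seq (U i l) ^+ 2 | i <- enum 'I_d] j.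

(* b_k(Sigma) = max_l lam_l * sum_{j=1}^k u_{l,(j)}^2 , k >= 1
   (max over the nonempty range 'I_d, with nonnegative terms, so the
    default 0 of the big max is harmless). *)
Definition bk (R : realFieldType) (d : nat) (lam : 'I_d -> R) (U : 'M[R]_d)
  (k : nat) : R :=
  \big[Num.max/0]_(l < d) (lam l * \sum_(j < k) sq_ordstat U l j).

(* Main.v *)
Require Import Defs.
From mathcomp Require Import all_boot all_order all_algebra.
Import Order.TTheory GRing.Theory Num.Theory.
Local Open Scope ring_scope.

Lemma sorted_take_le (R : realFieldType) (s : seq R) k x :
  sorted <=%R s -> (0 < k <= size s)%N -> x \in take k s -> x <= nth 0 s k.-1.
Proof.
move=> ss /andP[k0 ks] /(nthP 0) [j]; rewrite size_takel // => hj <-.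
rewrite nth_take //; apply: le_sorted_leq_nth => //; rewrite ?inE /=.
  exact: leq_trans hj ks.
  by rewrite prednK // (leq_trans _ ks).
by rewrite -ltnS prednK.
Qed.

Lemma sorted_drop_ge (R : realFieldType) (s : seq R) k x :
  sorted <=%R s -> (0 < k <= size s)%N -> x \in drop k s -> nth 0 s k.-1 <= x.
Proof.
move=> ss /andP[k0 ks] /(nthP 0) [j]; rewrite size_drop => hj <-.
rewrite nth_drop; apply: le_sorted_leq_nth => //; rewrite ?inE /=.
  by rewrite prednK // (leq_trans _ ks).
  by rewrite -ltn_subRL.
by rewrite (leq_trans (leq_pred _)) // leq_addr.
Qed.

Lemma count_sorted_le (R : realFieldType) (s : seq R) k :
  sorted <=%R s -> (0 < k <= size s)%N ->
  (k <= count (fun x : R => (x <= nth 0 s k.-1)%R) s)%N.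
Proof.
move=> ss hk; set c := nth 0 s k.-1.
have: all (fun x => x <= c) (take k s).
  by apply/allP => x hx; exact: sorted_take_le.
rewrite all_count => /eqP h.
rewrite -[X in count _ X](cat_take_drop k) count_cat h size_takel ?leq_addr //.
by case/andP: hk.
Qed.

Lemma sum_sorted_eq (R : realFieldType) (s : seq R) k :
  sorted <=%R s -> (0 < k <= size s)%N ->
  \sum_(x <- s) Num.max (nth 0 s k.-1 - x) 0 + \sum_(j < k) nth 0 s j
  = nth 0 s k.-1 *+ k.
Proof.
move=> ss hk; set c := nth 0 s k.-1.
have ks : (k <= size s)%N by case/andP: hk.
have -> : \sum_(j < k) nth 0 s j = \sum_(x <- take k s) x.
  rewrite (big_nth 0) size_takel // big_mkord; apply: eq_bigr => j _.
  by rewrite nth_take.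
rewrite -[X in \sum_(x <- X) _](cat_take_drop k) big_cat /=.
rewrite [X in _ + X + _]big1_seq ?addr0; last first.
  move=> x /= hx; apply/max_idPr; rewrite subr_le0.
  exact: sorted_drop_ge hx.
rewrite (eq_big_seq (fun x => c - x)); last first.
  move=> x hx; apply/max_idPl; rewrite subr_ge0.
  exact: sorted_take_le hx.
rewrite sumrB subrK (big_nth 0) size_takel // sumr_const_nat subn0 //.
Qed.

Lemma sum_small_le (R : realFieldType) (T : finType) (w : T -> R) (P : pred T) k :
  (forall i, 0 <= w i) -> (0 < k)%N -> (k <= #|P|)%N ->
  \sum_(j < k) nth 0 (sort <=%R [seq w i | i <- enum T]) j <= \sum_(i | P i) w i.
Proof.
move=> w0 k0 kP.
set s := sort _ _; set c := nth 0 s k.-1.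
have sz : size s = #|T| by rewrite size_sort size_map -cardT.
have ks : (k <= size s)%N by rewrite sz (leq_trans kP) ?max_card.
have hk : (0 < k <= size s)%N by rewrite k0.
have c0 : 0 <= c.
  have : c \in s by rewrite mem_nth // (leq_trans _ ks) // prednK.
  by rewrite mem_sort => /mapP [i _ ->].
have E := @sum_sorted_eq R s k (sort_le_sorted _) hk; rewrite -/s -/c in E.
have -> : \sum_(j < k) nth 0 s j = c *+ k - \sum_(x <- s) Num.max (c - x) 0.
  by rewrite -E [X in X - _]addrC addrK.
have -> : \sum_(x <- s) Num.max (c - x) 0 = \sum_i Num.max (c - w i) 0.
  have ps : perm_eq s [seq w i | i <- enum T] by rewrite perm_sort.
  rewrite (perm_big _ ps) big_map.
  by rewrite big_enum.
rewrite (bigID P) /= opprD addrA.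
have h1 : 0 <= \sum_(i | ~~ P i) Num.max (c - w i) 0.
  by apply: sumr_ge0 => i _; rewrite le_max lexx orbT.
have h2 : c *+ k <= c *+ #|P| by rewrite -[c *+ k]mulr_natr -[c *+ #|P|]mulr_natr ler_wpM2l // ler_nat.
have h3 : c *+ #|P| - \sum_(i | P i) Num.max (c - w i) 0 <= \sum_(i | P i) w i.
  rewrite -sumr_const -sumrB; apply: ler_sum => i _.
  by rewrite lerBlDr -lerBlDl le_max lexx.
apply: le_trans h3; rewrite lerBlDr -addrA (addrC (- _)) addrA.
by rewrite lerD2r (le_trans h2) // lerDl.
Qed.

Lemma qf_ge (R : realFieldType) d (S : 'M[R]_d) (v x : 'cV[R]_d) (lm : R) :
  S^T = S -> (forall y : 'cV[R]_d, 0 <= (y^T *m S *m y) 0 0) ->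
  S *m v = lm *: v -> (v^T *m v) 0 0 = 1 ->
  lm * ((v^T *m x) 0 0) ^+ 2 <= (x^T *m S *m x) 0 0.
Proof.
move=> hS hpsd hSv hv1.
set a := (v^T *m x) 0 0.
set y := x - a *: v.
have hv1' : v^T *m v = 1%:M by rewrite [LHS]mx11_scalar hv1.
have hvS : v^T *m S = lm *: v^T by rewrite -{1}hS -trmx_mul hSv linearZ.
have ev : (v^T *m y) 0 0 = 0.
  by rewrite /y mulmxBr -scalemxAr hv1' [v^T *m x]mx11_scalar -/a scalemx1 subrr mxE.
have ey : (y^T *m v) 0 0 = 0.
  by rewrite -[y^T *m v]trmxK trmx_mul trmxK mxE.
have hx : x = a *: v + y by rewrite /y addrC subrK.
have e1 : (a *: v + y)^T = a *: v^T + y^T by rewrite linearD linearZ.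
clearbody y; rewrite hx e1 !mulmxDl !mulmxDr -!scalemxAl -!scalemxAr hvS -[y^T *m S *m v]mulmxA hSv.
have ev' : v^T *m y = 0 by rewrite [LHS]mx11_scalar ev raddf0.
have ey' : y^T *m v = 0 by rewrite [LHS]mx11_scalar ey raddf0.
rewrite -!scalemxAl -!scalemxAr hv1' ev' ey' !scaler0 !addr0 add0r.
have hq := hpsd y.
rewrite [X in _ <= X]mxE !scalerA scalemx1 [X in _ <= X + _]mxE eqxx mulr1n.
by rewrite -(addr0 (lm * a ^+ 2)) lerD // expr2 mulrC mulrA.
Qed.

Lemma card_count (T : finType) (P : pred T) : #|P| = count P (enum T).
Proof. by rewrite cardE -size_filter /enum_mem -enumT /= filter_predT. Qed.

Lemma mx11B (R : realFieldType) (M N : 'M[R]_1) : (M - N) 0 0 = M 0 0 - N 0 0.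
Proof. by rewrite !mxE. Qed.

Lemma qf_diag (R : realFieldType) d (delta : 'rV[R]_d) (x : 'cV[R]_d) :
  (x^T *m diag_mx delta *m x) 0 0 = \sum_i delta 0 i * x i 0 ^+ 2.
Proof.
rewrite mul_mx_diag mxE; apply: eq_bigr => i _; rewrite !mxE.
by rewrite [_ * delta 0 i]mulrC -mulrA -expr2.
Qed.

Theorem proposition5 (R : realFieldType) (d : nat) (Sigma : 'M[R]_d)
  (lam : 'I_d -> R) (U : 'M[R]_d) (delta : 'rV[R]_d) :
  psd Sigma ->
  (forall l l' : 'I_d, (l <= l')%N -> lam l' <= lam l) ->
  (forall l : 'I_d, 0 <= lam l) ->
  U^T *m U = 1%:M ->
  (forall l : 'I_d, Sigma *m col l U = lam l *: col l U) ->
  psd (diag_mx delta - Sigma) ->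
  forall k : nat, (1 <= k <= d)%N ->
    ordstat [seq delta 0 i | i <- enum 'I_d] k.-1 >= bk lam U k.
Proof.
move=> [hS hpsdS] _ hlam0 hU hSv [_ hpsdD] k /andP[k1 kd].
set ds := [seq delta 0 i | i <- enum 'I_d].
set c := ordstat ds k.-1.
have sz : size (sort <=%R ds) = d by rewrite size_sort size_map size_enum_ord.
have hk : (0 < k <= size (sort <=%R ds))%N by rewrite sz k1 kd.
have hdiag : forall x : 'cV[R]_d,
    (x^T *m Sigma *m x) 0 0 <= (x^T *m diag_mx delta *m x) 0 0.
  move=> x; have := hpsdD x; rewrite mulmxBr mulmxBl mx11B.
  by rewrite subr_ge0.
have d0 : forall i, 0 <= delta 0 i.
  move=> i; have := hdiag (delta_mx i 0); rewrite qf_diag.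
  rewrite (bigD1 i) //= big1 => [|j ne]; last first.
    by rewrite mxE (negbTE ne) /= expr2 !mulr0.
  rewrite [delta_mx i 0 i 0]mxE !eqxx /= expr1n mulr1 addr0 => h.
  exact: le_trans (hpsdS _) h.
have c0 : 0 <= c.
  have : c \in sort <=%R ds by rewrite mem_nth // sz (leq_trans _ kd) // prednK.
  by rewrite mem_sort => /mapP [i _ ->].
set P := fun i : 'I_d => delta 0 i <= c.
have cnt : (k <= #|P|)%N.
  have := @count_sorted_le R (sort <=%R ds) k (sort_le_sorted ds) hk.
  rewrite (permP (permEl (perm_sort <=%R ds))) count_map card_count.
  by [].
rewrite /bk; apply: (big_ind (fun x => x <= c)) => //.
  by move=> x y hx hy; rewrite ge_max hx hy.
move=> l _.
set w := fun i : 'I_d => U i l ^+ 2.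
have hB := @sum_small_le R _ w P k (fun i => sqr_ge0 (U i l)) k1 cnt.
set S := \sum_(i | P i) w i in hB.
set B := \sum_(j < k) _ in hB.
have -> : \sum_(j < k) sq_ordstat U l j = B by [].
set x := \col_i (if P i then U i l else 0).
set v := col l U.
have hv1 : (v^T *m v) 0 0 = 1.
  have := congr1 (fun M : 'M[R]_d => M l l) hU; rewrite /= [in RHS]mxE eqxx mulr1n => <-.
  by rewrite /v !mxE; apply: eq_bigr => j _; rewrite !mxE.
have hvx : (v^T *m x) 0 0 = S.
  rewrite mxE /S [RHS]big_mkcond; apply: eq_bigr => i _; rewrite /x /v !mxE.
  by case: (P i); rewrite ?mulr0 // /w expr2.
have hdx : (x^T *m diag_mx delta *m x) 0 0 <= c * S.
  rewrite qf_diag /S mulr_sumr [X in _ <= X]big_mkcond /=; apply: ler_sum => i _.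
  rewrite /x !mxE; case hP: (P i); last by rewrite expr2 !mulr0.
  by rewrite ler_wpM2r ?sqr_ge0.
have hq := @qf_ge R d Sigma v x (lam l) hS hpsdS (hSv l) hv1.
rewrite hvx in hq.
have hin : lam l * S ^+ 2 <= c * S := le_trans hq (le_trans (hdiag x) hdx).
have S0 : 0 <= S by apply: sumr_ge0 => i _; exact: sqr_ge0.
case: (ltrgt0P S) S0 => // [Sp|Sz] _.
  have hlS : lam l * S <= c.
    by rewrite -(ler_pM2r Sp) -mulrA -expr2.
  exact: le_trans (ler_wpM2l (hlam0 l) hB) hlS.
apply: le_trans c0; rewrite Sz in hB.
exact: mulr_ge0_le0.
Qed.
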